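(* Let $G$ be a cofinite group and let $X=\{*\}\sqcup E(X)$ be a cofinite graph with a single vertex $*$. Let $\alpha\colon X\to G$ be a uniformly continuous map with $\alpha( * )=1_G$ and $\alpha(\overline e)=\alpha(e)^{-1}$ for all $e\in E(X)$, and let $\Gamma=\Gamma(G,X)$ be the cofinite Cayley graph. Then $\alpha$ generates $G$ topologically, i.e. $\overline{\langle\alpha(X)\rangle}=G$, if and only if $\Gamma$ is cofinitely connected.
   Context: A graph $\Gamma$ is a set $\Gamma=V(\Gamma)\sqcup E(\Gamma)$ with maps $s,t\colon E(\Gamma)\to V(\Gamma)$ and a fixed-point-free involution $e\mapsto\overline e$ of $E(\Gamma)$ with $s(\overline e)=t(e)$, $t(\overline e)=s(e)$. An equivalence relation $R$ on a graph is compatible if $R\subseteq (V\times V)\cup(E\times E)$, $(e,e')\in R$ implies $(s(e),s(e')),(t(e),t(e')),(\overline e,\overline{e'})\in R$, and $(e,\overline e)\notin R$ for all edges $e$; then $\Gamma/R$ is a graph. A cofinite entourage is an entourage that is an equivalence relation with finitely many classes. A cofinite graph is a graph with a Hausdorff uniformity in which the compatible cofinite entourages form a fundamental system. A cofinite group is a group with a Hausdorff uniformity having a fundamental system of cofinite congruences (cofinite entourages $R$ with $(a,b),(c,d)\in R\Rightarrow(ac,bd)\in R$). The cofinite Cayley graph $\Gamma(G,X)$ has $V=G\times\{*\}$, $E=G\times E(X)$, $s(g,e)=(g,* )$, $t(g,e)=(g\alpha(e),* )$, $\overline{(g,e)}=(g\alpha(e),\overline e)$, and carries the product uniformity of $G\times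 X$ (this makes it a cofinite graph). A cofinite graph is cofinitely connected if $\Gamma/R$ is path connected (any two vertices joined by a finite edge path $e_1\cdots e_n$ with $t(e_i)=s(e_{i+1})$) for every compatible cofinite entourage $R$. *)

(* Defs.v *)
From mathcomp Require Import all_boot classical_sets boolp topology.
Set Implicit Arguments. Unset Strict Implicit. Unset Printing Implicit Defensive.
Local Open Scope classical_set_scope.

Definition hausdorff_unif (T : uniformType) : Prop :=
  forall x y : T, (forall A, entourage A -> A (x, y)) -> x = y.

Definition equiv_rel (T : Type) (R : set (T * T)) : Prop :=
  (forall x, R (x, x)) /\ (forall x y, R (x, y) -> R (y, x)) /\
  (forall x y z, R (x, y) -> R (y, z) -> R (x, z)).

Definition finitely_many_classes (T : Type) (R : set (T * T)) : Prop :=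
  exists (n : nat) (f : 'I_n -> T), forall x, exists i, R (x, f i).

Definition cofinite_entourage (T : uniformType) (R : set (T * T)) : Prop :=
  entourage R /\ equiv_rel R /\ finitely_many_classes R.

Record group_ops (G : Type) := GroupOps {
  gmul : G -> G -> G; ginv : G -> G; gone : G }.

Definition is_group (G : Type) (o : group_ops G) : Prop :=
  (forall a b c, gmul o a (gmul o b c) = gmul o (gmul o a b) c) /\
  (forall a, gmul o (gone o) a = a) /\ (forall a, gmul o a (gone o) = a) /\
  (forall a, gmul o (ginv o a) a = gone o) /\ (forall a, gmul o a (ginv o a) = gone o).

Definition congruence (G : Type) (o : group_ops G) (R : set (G * G)) : Prop :=
  forall a b c d, R (a, b) -> R (c, d) -> R (gmul o a c, gmul o b d).

Definition cofinite_group (G : uniformType) (o : group_ops G) : Prop :=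
  is_group o /\ hausdorff_unif G /\
  forall U, entourage U ->
    exists R, cofinite_entourage R /\ congruence o R /\ R `<=` U.

Definition is_subgroup (G : Type) (o : group_ops G) (H : set G) : Prop :=
  H (gone o) /\ (forall a b, H a -> H b -> H (gmul o a b)) /\
  (forall a, H a -> H (ginv o a)).

Definition gen_subgroup (G : Type) (o : group_ops G) (A : set G) : set G :=
  [set x | forall H, is_subgroup o H -> A `<=` H -> H x].

(* A graph on a carrier T = V ⊔ E: gE selects the edges (the others are the
   vertices); gsrc, gtgt, grev are only meaningful on edges. *)
Record graph_data (T : Type) := GraphData {
  gE : T -> Prop; gsrc : T -> T; gtgt : T -> T; grev : T -> T }.

Definition is_graph (T : Type) (g : graph_data T) : Prop :=
  forall e, gE g e ->
    ~ gE g (gsrc g e) /\ ~ gE g (gtgt g e) /\ gE g (grev g e) /\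
    grev g (grev g e) = e /\ grev g e <> e /\
    gsrc g (grev g e) = gtgt g e /\ gtgt g (grev g e) = gsrc g e.

Definition compatible (T : Type) (g : graph_data T) (R : set (T * T)) : Prop :=
  equiv_rel R /\
  (forall x y, R (x, y) -> (gE g x <-> gE g y)) /\
  (forall e e', gE g e -> R (e, e') ->
     R (gsrc g e, gsrc g e') /\ R (gtgt g e, gtgt g e') /\ R (grev g e, grev g e')) /\
  (forall e, gE g e -> ~ R (e, grev g e)).

Definition cofinite_graph (T : uniformType) (g : graph_data T) : Prop :=
  is_graph g /\ hausdorff_unif T /\
  forall U, entourage U ->
    exists R, cofinite_entourage R /\ compatible g R /\ R `<=` U.

(* An edge path in the quotient graph Γ/R from the class of x to the class
   of y, given by representatives e_1 ... e_n of the edge classes: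
   [x] = s[e_1], t[e_i] = s[e_{i+1}], t[e_n] = [y]. *)
Fixpoint quot_walk (T : Type) (g : graph_data T) (R : set (T * T))
    (x : T) (p : seq T) (y : T) : Prop :=
  match p with
  | [::] => R (x, y)
  | e :: p' => gE g e /\ R (x, gsrc g e) /\ quot_walk g R (gtgt g e) p' y
  end.

Definition quotient_path_connected (T : Type) (g : graph_data T)
    (R : set (T * T)) : Prop :=
  forall v w, ~ gE g v -> ~ gE g w -> exists p : seq T, quot_walk g R v p w.

Definition cofinitely_connected (T : uniformType) (g : graph_data T) : Prop :=
  forall R, cofinite_entourage R -> compatible g R -> quotient_path_connected g R.

(* Carrier G × X (with the product uniformity): vertices (g, star),
   edges (g, e) for e an edge of X. *)
Definition cayley_graph (G X : Type) (o : group_ops G) (Xg : graph_data X)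
    (star : X) (alpha : X -> G) : graph_data (G * X) :=
  {| gE := fun gx => gE Xg gx.2;
     gsrc := fun gx => (gx.1, star);
     gtgt := fun gx => (gmul o gx.1 (alpha gx.2), star);
     grev := fun gx => (gmul o gx.1 (alpha gx.2), grev Xg gx.2) |}.

(* Main.v *)
Require Import Defs.
From mathcomp Require Import all_boot classical_sets boolp topology.
Local Open Scope classical_set_scope.

Lemma walk_r (T : Type) (g : graph_data T) (R : set (T * T)) :
  Defs.equiv_rel R -> forall x p y z,
  quot_walk g R x p y -> R (y, z) -> quot_walk g R x p z.
Proof.
move=> eR0; have [rf0 [sy0 tr]] : _ /\ _ /\ _ := eR0; move=> x p.
elim: p x => [|e p IH] x y z /=; first by move=> *; apply: tr; eauto.
by move=> [? [? ?]] ?; split => //; split => //; apply: IH; eauto.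
Qed.

Lemma walk_l (T : Type) (g : graph_data T) (R : set (T * T)) :
  Defs.equiv_rel R -> forall x x' p y,
  R (x, x') -> quot_walk g R x' p y -> quot_walk g R x p y.
Proof.
move=> eR0; have [rf0 [sy0 tr]] : _ /\ _ /\ _ := eR0; move=> x x' p y.
case: p => [|e p] /=; first by move=> *; apply: tr; eauto.
by move=> ? [? [? ?]]; split => //; split => //; apply: tr; eauto.
Qed.

Lemma walk_cat (T : Type) (g : graph_data T) (R : set (T * T)) :
  Defs.equiv_rel R -> forall x p y q z,
  quot_walk g R x p y -> quot_walk g R y q z -> quot_walk g R x (p ++ q) z.
Proof.
move=> eR x p; elim: p x => [|e p IH] x y q z /=.
  by move=> ? ?; apply: walk_l; eauto.
by move=> [? [? ?]] ?; split => //; split => //; apply: IH; eauto.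
Qed.

Lemma walk_rev (T : Type) (g : graph_data T) (R : set (T * T)) :
  Defs.equiv_rel R ->
  (forall e, gE g e -> gE g (grev g e) /\ gsrc g (grev g e) = gtgt g e /\ gtgt g (grev g e) = gsrc g e) ->
  forall x p y, quot_walk g R x p y ->
  quot_walk g R y (rev (map (grev g) p)) x.
Proof.
move=> eR hrev; have [rf [sy tr]] : _ /\ _ /\ _ := eR.
move=> x p; elim: p x => [|e p IH] x y /=; first by move=> ?; apply: sy.
move=> [Ee [Rx W]]; rewrite rev_cons -cats1.
apply: walk_cat (IH _ _ W) _ => //=.
have [E1 [E2 E3]] := hrev _ Ee.
split => //; rewrite E2 E3; split => //; by apply: sy.
Qed.

Theorem mainTheorem3 (G : uniformType) (o : group_ops G)
  (X : uniformType) (Xg : graph_data X) (star : X) (alpha : X -> G) :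
  cofinite_group o ->
  cofinite_graph Xg ->
  (forall x, ~ gE Xg x <-> x = star) ->
  unif_continuous alpha ->
  alpha star = gone o ->
  (forall e, gE Xg e -> alpha (grev Xg e) = ginv o (alpha e)) ->
  (closure (gen_subgroup o (range alpha)) = [set: G] <->
   @cofinitely_connected (G * X)%type (cayley_graph o Xg star alpha)).
Proof.
move=> [grp [_ cofG]] [isg [_ cofX]] hstar hunif hone hinv.
have [gA [g1l [g1r [gVl gVr]]]] := grp.
have nEstar : ~ gE Xg star by apply/hstar.
split.
- move=> hcl R [entR [eR fin]] cR v w nv nw.
  pose Cg := cayley_graph o Xg star alpha.
  have vst : forall u : G * X, ~ gE Cg u -> u = (u.1, star).
    by move=> [a b] /= /hstar ->.
  have [[B1 B2] /= [eB1 eB2] sB] := entR.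
  have RB : forall a a' x x', B1 (a, a') -> B2 (x, x') -> R ((a, x), (a', x')).
    move=> a a' x x' h1 h2.
    have [[[u1 u2] [u3 u4]] Ru /= E] := sB ((a, a'), (x, x')) (conj h1 h2).
    by case: E => <- <- <- <-.
  have [C [[eC [[Crf [Csy Ctr]] _]] [Ccg sC]]] := cofG _ eB1.
  have hrevC : forall e, gE Cg e -> gE Cg (grev Cg e) /\
      gsrc Cg (grev Cg e) = gtgt Cg e /\ gtgt Cg (grev Cg e) = gsrc Cg e.
    move=> [a e] /= Ee; have [_ [_ [E3 _]]] := isg e Ee.
    by split => //; split => //; rewrite hinv // -gA gVr g1r.
  pose S := [set k | forall a, exists p, quot_walk Cg R (a, star) p (gmul o a k, star)].
  have subS : is_subgroup o S.
    split; [|split].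
    + by move=> a; exists [::] => /=; rewrite g1r; case: eR.
    + move=> a b Sa Sb c; have [p Wp] := Sa c; have [q Wq] := Sb (gmul o c a).
      exists (p ++ q); rewrite gA; exact: (@walk_cat _ _ _ eR _ _ _ _ _ Wp Wq).
    + move=> a Sa c; have [p Wp] := Sa (gmul o c (ginv o a)).
      exists (rev (map (grev Cg) p)); apply: walk_rev => //.
      by move: Wp; rewrite -gA gVl g1r.
  have HS : gen_subgroup o (range alpha) `<=` S.
    move=> k; apply => // _ [x _ <-] a.
    case: (pselect (gE Xg x)) => Ex.
    + exists [:: (a, x)] => /=; split => //; case: eR => rf _; by split.
    + have -> : x = star by apply/hstar.
      by exists [::] => /=; rewrite hone g1r; case: eR.
  rewrite (vst v nv) (vst w nw).
  set a := v.1; set b := w.1.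
  have : closure (gen_subgroup o (range alpha)) (gmul o (ginv o a) b) by rewrite hcl.
  move=> /(_ _ (nbhs_entourage (gmul o (ginv o a) b) eC)) [k [Hk /xsectionP Ck]].
  have [p Wp] := HS _ Hk a.
  exists p; apply: walk_r Wp _ => //.
  apply: RB; last exact: entourage_refl.
  apply: sC; apply: Csy.
  have := Ccg _ _ _ _ (Crf a) Ck.
  by rewrite gA gVr g1l.
- move=> hcc; apply/seteqP; split => // h _ B /nbhsP [U eU sUB].
  have [C [[eC [[Crf [Csy Ctr]] [n [f fC]]]] [Ccg sC]]] := cofG _ eU.
  have eCa := hunif _ eC.
  have [D [[eD [eqD [m [f' fD]]]] [cD sD]]] := cofX _ eCa.
  have [[Drf [Dsy Dtr]] [DE [Dst Drv]]] := cD.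
  pose R := [set uv : (G * X) * (G * X) | C (uv.1.1, uv.2.1) /\ D (uv.1.2, uv.2.2)].
  have DC : forall x x', D (x, x') -> C (alpha x, alpha x') by move=> x x' /sD.
  have cR : compatible (cayley_graph o Xg star alpha) R.
    split; [split; [|split]|split; [|split]].
    + by move=> [a x]; split.
    + by move=> [a x] [b y] /= [? ?]; split; auto.
    + by move=> [a x] [b y] [c z] /= [? ?] [? ?]; split; eauto.
    + by move=> [a x] [b y] /= [_ ?]; apply: DE.
    + move=> [a x] [b y] /= Ex [Cab Dxy]; have [h1 [h2 h3]] := Dst _ _ Ex Dxy.
      split; [split=> //|split; split => //]; by apply: Ccg => //; apply: DC.
    + by move=> [a x] /= Ex [_ ?]; apply: (Drv x).
  have cofR : cofinite_entourage R.
    split; [|split].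
    + exists (C, D) => //= [[[a b] [x y]]] [/= ? ?].
      by exists ((a, x), (b, y)).
    + by case: cR.
    + exists #|{: 'I_n * 'I_m}|, (fun i => let: (j, l) := enum_val i in (f j, f' l)).
      move=> [a x]; have [j Hj] := fC a; have [l Hl] := fD x.
      by exists (enum_rank (j, l)); rewrite enum_rankK.
  have [p Wp] := hcc R cofR cR (gone o, star) (h, star) nEstar nEstar.
  have key : forall p (s t : G * X) k, quot_walk (cayley_graph o Xg star alpha) R s p t ->
      gen_subgroup o (range alpha) k -> C (s.1, k) ->
      exists2 k', gen_subgroup o (range alpha) k' & C (t.1, k').
    elim => [|e q IH] s t k /=.
    + move=> [? _] Hk Ck; exists k => //; apply: Ctr Ck; by apply: Csy.
    + move=> [Ee [[Cs _] W]] Hk Ck.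
      apply: (IH _ _ (gmul o k (alpha e.2))) W _ _.
      * move=> H sH sub; have HkH := Hk H sH sub; case: sH => [_ [mH _]]; apply: mH => //.
        by apply: sub; exists e.2.
      * by apply: Ccg => //; apply: Ctr Ck; apply: Csy.
  have [k' Hk' Ck'] := key _ _ _ (gone o) Wp (fun H sH _ => sH.1) (Crf _).
  by exists k'; split => //; apply: sUB; apply/xsectionP; apply: sC.
Qed.
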